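(* Let $F$ be a probability distribution on the non-negative integers. In the Coin Toss (CT) model with degree distribution $F$, the total length $T$ of all edges at the origin satisfies $\mathbb{E}[T]<\infty$ if and only if $F$ has bounded support.
   Context: CT model: independently for each $i\in\mathbb{Z}$ let $D_i\sim F$, and attach $D_i$ stubs $s_{i,1},\dots,s_{i,D_i}$ to vertex $i$. For $j\ge1$ let $\Gamma_j=\{i\in\mathbb{Z}:D_i\ge j\}$; the stubs $s_{i,j}$, $i\in\Gamma_j$, form level $j$. For each level $j$ separately (with independent fair coin tosses, independent of the degrees) the level-$j$ stubs are given directions so that along $\Gamma_j$ (in increasing order) the directions alternate right, left, right, left, \dots, the direction of the stub at the first vertex $i\ge 0$ of $\Gamma_j$ being right or left according to a fair coin. A level-$j$ stub at $i$ pointing right (left) is joined to the level-$j$ stub at the $(2j-1)$-th vertex of $\Gamma_j$ to the right (left) of $i$, producing an edge. The length of an edge $\{i,k\}$ is $|i-k|$, and $T$ is the total length of all edges at vertex $0$. *)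

(* Defs.v *)
From HB Require Import structures.
From mathcomp Require Import all_boot all_order all_algebra.
From mathcomp Require Import all_classical all_reals all_analysis.

Set Implicit Arguments.
Unset Strict Implicit.
Unset Printing Implicit Defensive.

Import Order.TTheory GRing.Theory Num.Theory.
Local Open Scope classical_set_scope.
Local Open Scope ring_scope.

(* (c j = true means: the level-j stub at the first vertex i >= 0 of    *)
(*  Gamma_j points right).                                              *)

(* number of vertices of Gamma_j = {i | D i >= j} in [a, a + n) *)
Definition gamma_cnt (D : int -> nat) (j : nat) (a : int) (n : nat) : nat :=
  (\sum_(0 <= k < n) (j <= D (a + k%:Z)%R))%N.

Definition right_pred (D : int -> nat) (j : nat) (i : int) : pred nat :=
  fun d => gamma_cnt D j (i + 1) d == (2 * j).-1.

Definition left_pred (D : int -> nat) (j : nat) (i : int) : pred nat :=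
  fun d => gamma_cnt D j (i - d%:Z) d == (2 * j).-1.

Definition dist_right (D : int -> nat) (j : nat) (i : int) : option nat :=
  match pselect (exists d, right_pred D j i d) with
  | left h => Some (ex_minn h)
  | right _ => None
  end.

Definition dist_left (D : int -> nat) (j : nat) (i : int) : option nat :=
  match pselect (exists d, left_pred D j i d) with
  | left h => Some (ex_minn h)
  | right _ => None
  end.

Definition gamma_rank (D : int -> nat) (j : nat) (i : int) : nat :=
  if 0 <= i then gamma_cnt D j 0 `|i|%N else gamma_cnt D j i `|i|%N.

(* direction of the level-j stub at i (i in Gamma_j): true = right.
   Directions alternate along Gamma_j, and the first vertex i >= 0 of
   Gamma_j points right iff c j. *)
Definition stub_right (D : int -> nat) (c : nat -> bool) (j : nat) (i : int)
  : bool := c j == ~~ odd (gamma_rank D j i).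

Definition stub_len (D : int -> nat) (c : nat -> bool) (j : nat) (i : int)
  : option nat :=
  if stub_right D c j i then dist_right D j i else dist_left D j i.

(* total length of all edges at vertex 0: one edge per stub s_{0,j},
   j = 1..D_0 (a non-existing partner, a null event, contributes 0) *)
Definition CT_T (R : realType) (D : int -> nat) (c : nat -> bool) : R :=
  ((\sum_(1 <= j < (D 0).+1) odflt 0%N (stub_len D c j 0))%N)%:R.

Definition CT_family (d : measure_display) (Omega : measurableType d)
  (D : int -> Omega -> nat) (c : nat -> Omega -> bool)
  : int + nat -> Omega -> nat :=
  fun k => match k with inl i => D i | inr j => fun w => nat_of_bool (c j w) end.

Definition mutually_independent (R : realType) (d : measure_display)
  (Omega : measurableType d) (P : probability Omega R) (I : eqType)
  (X : I -> Omega -> nat) : Prop :=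
  forall (J : seq I), uniq J -> forall B : I -> set nat,
    P (\bigcap_(k in [set k | k \in J]) (X k @^-1` B k))
    = (\prod_(k <- J) P (X k @^-1` B k))%E.

Definition CT_model (R : realType) (d : measure_display)
  (Omega : measurableType d) (P : probability Omega R) (F : nat -> R)
  (D : int -> Omega -> nat) (c : nat -> Omega -> bool) : Prop :=
  [/\ (forall i n, measurable [set w | D i w = n]),
      (forall j, measurable [set w | c j w]),
      (forall i n, P [set w | D i w = n] = (F n)%:E),
      (forall j, (0 < j)%N -> P [set w | c j w] = (2^-1)%:E) &
      mutually_independent P (CT_family D c)].

Definition bounded_support (R : realType) (F : nat -> R) : Prop :=
  exists K : nat, forall n, (K < n)%N -> F n = 0.

(* Main.v *)
Require Import Defs.
From HB Require Import structures.
From mathcomp Require Import all_boot all_order all_algebra.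
From mathcomp Require Import all_classical all_reals all_analysis.
From mathcomp Require Import zify ring lra.
Import Order.TTheory GRing.Theory Num.Theory.
Local Open Scope classical_set_scope.
Local Open Scope ring_scope.
From mathcomp Require Import measurable_realfun lebesgue_integral.
Section Det.
Variable Dz : int -> nat.

Lemma gcnt_S j a n : gamma_cnt Dz j a n.+1 = (gamma_cnt Dz j a n + (j <= Dz (a + n%:Z)))%N.
Proof. by rewrite /gamma_cnt big_nat_recr. Qed.

Lemma gcnt0 j a : gamma_cnt Dz j a 0 = 0%N.
Proof. by rewrite /gamma_cnt big_geq. Qed.

Lemma gcnt_mono j a x y : (x <= y)%N -> (gamma_cnt Dz j a x <= gamma_cnt Dz j a y)%N.
Proof.
move=> xy; rewrite /gamma_cnt (@big_cat_nat _ _ _ x 0 y _ _ (leq0n x) xy) /=; exact: leq_addr.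
Qed.

Lemma gcntL j n : gamma_cnt Dz j (0 - n%:Z) n = (\sum_(0 <= k < n) (j <= Dz (- (k.+1)%:Z)))%N.
Proof.
rewrite /gamma_cnt big_nat_rev /=; apply: eq_big_nat => k /andP[_ kn].
congr (_ <= Dz _)%N; rewrite add0n; lia.
Qed.

Lemma ivt (g : nat -> nat) m e : g 0%N = 0%N -> (forall n, g n.+1 <= (g n).+1)%N ->
  (m <= g e)%N -> exists2 x, (x <= e)%N & g x = m.
Proof.
move=> g0 gS; elim: e => [|e IH] me.
  by exists 0%N => //; apply/eqP; rewrite eqn_leq me g0.
case: (leqP m (g e)) => [/IH [x xe gx]|lt]; first by exists x => //; exact: leqW.
exists e.+1 => //; apply/eqP; rewrite eqn_leq me andbT.
by apply: leq_trans (gS e) _.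
Qed.

Lemma distR_le j e : ((2 * j).-1 <= gamma_cnt Dz j 1 e)%N ->
  exists2 x, dist_right Dz j 0 = Some x & (x <= e)%N.
Proof.
move=> H.
have gS : forall n, (gamma_cnt Dz j 1 n.+1 <= (gamma_cnt Dz j 1 n).+1)%N.
  by move=> n; rewrite gcnt_S; case: (j <= _)%N; rewrite ?addn1 ?addn0.
have [y ye gy] := @ivt (gamma_cnt Dz j 1) _ _ (gcnt0 j 1) gS H.
have Py : right_pred Dz j 0 y by rewrite /right_pred add0r gy.
rewrite /dist_right; case: pselect => [h|h]; last by exfalso; apply: h; exists y.
exists (ex_minn h) => //; case: ex_minnP => x _ Hm; exact: leq_trans (Hm _ Py) ye.
Qed.

Lemma distL_le j e : ((2 * j).-1 <= gamma_cnt Dz j (0 - e%:Z) e)%N ->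
  exists2 x, dist_left Dz j 0 = Some x & (x <= e)%N.
Proof.
move=> H.
have gS : forall n, (gamma_cnt Dz j (0 - n.+1%:Z) n.+1 <= (gamma_cnt Dz j (0 - n%:Z) n).+1)%N.
  by move=> n; rewrite !gcntL big_nat_recr //=; case: (j <= _)%N; rewrite ?addn1 ?addn0.
have [y ye gy] := @ivt (fun n => gamma_cnt Dz j (0 - n%:Z) n) _ _ (gcnt0 j _) gS H.
have Py : left_pred Dz j 0 y by rewrite /left_pred gy.
rewrite /dist_left; case: pselect => [h|h]; last by exfalso; apply: h; exists y.
exists (ex_minn h) => //; case: ex_minnP => x _ Hm; exact: leq_trans (Hm _ Py) ye.
Qed.

Lemma distR_some j x : dist_right Dz j 0 = Some x -> gamma_cnt Dz j 1 x = (2 * j).-1.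
Proof.
rewrite /dist_right; case: pselect => [h|//] [<-]; case: ex_minnP => y.
by rewrite /right_pred add0r => /eqP.
Qed.

Lemma distL_some j x : dist_left Dz j 0 = Some x -> gamma_cnt Dz j (0 - x%:Z) x = (2 * j).-1.
Proof.
rewrite /dist_left; case: pselect => [h|//] [<-]; case: ex_minnP => y.
by rewrite /left_pred => /eqP.
Qed.

End Det.
Lemma sum_has (h : nat -> bool) a b : has (fun t => h (a + t)%N) (iota 0 b) ->
  (1 <= \sum_(0 <= t < b) h (a + t)%N)%N.
Proof.
case/hasP => t tin ht.
rewrite /index_iota subn0 (bigD1_seq t) ?iota_uniq //= ht; exact: leq_addr.
Qed.

Lemma sum_mono (h : nat -> bool) x y : (x <= y)%N ->
  (\sum_(0 <= k < x) h k <= \sum_(0 <= k < y) h k)%N.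
Proof. move=> xy; rewrite (@big_cat_nat _ _ _ x 0 y _ _ (leq0n x) xy) /=; exact: leq_addr. Qed.

Lemma block_nat (h : nat -> bool) m d : (0 < m)%N -> (\sum_(0 <= k < d) h k < m)%N ->
  exists2 i, (i < m)%N & all (fun t => ~~ h (i * (d %/ m)%N + t)%N) (iota 0 (d %/ m)%N).
Proof.
move=> m0 hs.
set b := (d %/ m)%N.
have [//|nH] := pselect (exists2 i, (i < m)%N & all (fun t => ~~ h (i * b + t)%N) (iota 0 b)).
exfalso; move: hs; apply/negP; rewrite -leqNgt.
have H i : (i < m)%N -> has (fun t => h (i * b + t)%N) (iota 0 b).
  move=> im; apply/negPn/negP => hn; apply: nH; exists i => //.
  by rewrite all_predC.
have key n : (n <= m)%N -> (n <= \sum_(0 <= k < n * b) h k)%N.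
  elim: n => [|n IH] nm //.
  rewrite mulSn [(b + n * b)%N]addnC (@big_cat_nat _ _ _ (n * b) 0 (n * b + b) _ _ (leq0n _) (leq_addr _ _)) /=.
  have E : (\sum_(n * b <= k < n * b + b) h k = \sum_(0 <= t < b) h (n * b + t)%N)%N.
    rewrite -{1}[(n * b)%N]add0n big_addn [(n * b + b)%N]addnC addnK.
    by apply: eq_bigr => t _; rewrite addnC.
  rewrite E -addn1; apply: leq_add; first exact: IH (ltnW nm).
  exact: (@sum_has h _ _ (H n nm)).
apply: leq_trans (key m (leqnn m)) _; apply: sum_mono.
by rewrite mulnC leq_trunc_div.
Qed.
Section RealLem.
Variable R : realType.

Lemma bern (x : R) n : -1 <= x -> 1 + n%:R * x <= (1 + x) ^+ n.
Proof.
move=> x1; elim: n => [|n IH]; first by rewrite mul0r addr0 expr0.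
rewrite exprSr; apply: le_trans (_ : (1 + n%:R * x) * (1 + x) <= _); last first.
  by apply: ler_wpM2r => //; lra.
rewrite mulrDl mul1r mulrDr mulr1 -natr1.
have : 0 <= n%:R * x * x :> R by rewrite -mulrA mulr_ge0 // -expr2 sqr_ge0.
lra.
Qed.

Lemma geom_le (q : R) N : 0 <= q -> q < 1 -> \sum_(0 <= b < N) q ^+ b <= (1 - q)^-1.
Proof.
move=> q0 q1; elim: N => [|N IH]; first by rewrite big_geq // invr_ge0; lra.
rewrite big_nat_recl // expr0.
under eq_bigr do rewrite exprS.
rewrite -mulr_sumr.
have h1 : 0 < 1 - q by lra.
apply: le_trans (_ : 1 + q * (1 - q)^-1 <= _).
  by rewrite lerD2l; apply: ler_wpM2l.
rewrite -[X in X + _](divff (lt0r_neq0 h1)) -mulrDl; lra.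
Qed.

Lemma geom_div_le (q : R) N m : 0 <= q -> q < 1 -> (0 < m)%N ->
  \sum_(0 <= n < N) q ^+ (n %/ m) <= m%:R * (1 - q)^-1.
Proof.
move=> q0 q1 m0.
have key K : \sum_(0 <= n < K * m) q ^+ (n %/ m) = m%:R * \sum_(0 <= b < K) q ^+ b.
  elim: K => [|K IH]; first by rewrite !big_geq // mulr0.
  rewrite mulSn addnC (@big_cat_nat _ _ _ (K * m) 0 (K * m + m)) //= ?leq_addr //.
  rewrite IH big_nat_recr //= mulrDr; congr (_ + _).
  rewrite -{1}[(K * m)%N]add0n big_addn [(K * m + m)%N]addnC addnK.
  rewrite (@eq_big_nat _ _ _ 0 m _ (fun _ => q ^+ K)).
    by rewrite sumr_const_nat subn0 mulr_natl.
  move=> i /andP[_ im] ; congr (_ ^+ _).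
  by rewrite addnC divnMDl // divn_small // addn0.
apply: le_trans (_ : \sum_(0 <= n < N * m) q ^+ (n %/ m) <= _).
  rewrite (@big_cat_nat _ _ _ N 0 (N * m)) //= ?leq_pmulr //.
  rewrite lerDl; apply: sumr_ge0 => i _; exact: exprn_ge0.
rewrite key; apply: ler_wpM2l => //; exact: geom_le.
Qed.

Lemma arith_bound (p g ab m : R) (L b : nat) :
  0 < p -> p <= 8^-1 -> 1 <= m -> 0 <= ab ->
  L%:R <= (4 * p)^-1 -> (4 * p)^-1 < L.+1%:R ->
  8 * m / p ^+ 2 < b%:R ->
  p * (1 - p) ^+ (L + L) = g + ab ->
  ab <= (1 - p) ^+ b * (2 * m) ->
  1 / 32 <= L%:R * g.
Proof.
move=> p0 p8 m1 ab0 hL1 hL2 hbt eA hab.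
have hLp1 : L%:R * p <= 4^-1.
  have e : (4 * p)^-1 * p = 4^-1 by field; rewrite gt_eqF.
  by rewrite -e; apply: ler_wpM2r => //; exact: ltW.
have hLp2 : 8^-1 <= L%:R * p.
  have e : (4 * p)^-1 * p = 4^-1 by field; rewrite gt_eqF.
  have h : 4^-1 < L.+1%:R * p by rewrite -e ltr_pM2r.
  rewrite -[L.+1%:R]natr1 mulrDl mul1r in h; lra.
have p2 : 0 < p ^+ 2 by rewrite exprn_gt0.
have hb : 8 * m < b%:R * p ^+ 2.
  have e : 8 * m = 8 * m / p ^+ 2 * p ^+ 2 by rewrite divfK // gt_eqF.
  by rewrite [X in X < _]e ltr_pM2r.
set y := (1 - p) ^+ L.
have hy : 1 - L%:R * p <= y.
  have := @bern (- p) L; rewrite mulrN; apply; lra.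
have hy0 : 0 <= y by rewrite exprn_ge0 //; lra.
rewrite exprD -/y in eA.
set z := (1 - p) ^+ b in hab *.
have z0 : 0 <= z by rewrite exprn_ge0 //; lra.
have hz : z * (1 + b%:R * p) <= 1.
  apply: le_trans (_ : z * (1 + p) ^+ b <= 1).
    by apply: ler_wpM2l => //; apply: bern; lra.
  rewrite /z -exprMn; apply: exprn_ile1; nra.
have hzbp : z * (b%:R * p) <= 1 by nra.
have h8 : 8 * m * z <= p.
  have h1 : 8 * m * z <= b%:R * p ^+ 2 * z by apply: ler_wpM2r => //; exact: ltW.
  have h2 : b%:R * p ^+ 2 * z = p * (z * (b%:R * p)) by rewrite expr2; ring.
  have h3 : p * (z * (b%:R * p)) <= p by rewrite -[X in _ <= X]mulr1; apply: ler_wpM2l => //; exact: ltW.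
  lra.
have gb : 4^-1 * p <= g.
  have : 9 / 16 <= y * y by nra.
  nra.
have L0 : 0 <= L%:R :> R by [].
nra.
Qed.

End RealLem.

Section Prob.
Variables (R : realType) (d : measure_display) (Omega : measurableType d)
  (P : probability Omega R) (F : nat -> R) (D : int -> Omega -> nat) (c : nat -> Omega -> bool).
Hypothesis HM : CT_model P F D c.

Lemma mDn k n : measurable [set w | D k w = n].
Proof. by case: HM. Qed.

Lemma bigcup_s k (s : pred nat) :
  [set w | s (D k w)] = \bigcup_(n in [set n | s n]) [set w | D k w = n].
Proof.
apply/seteqP; split => w /=; first by move=> h; exists (D k w).
by case=> n /= sn ->.
Qed.

Lemma ms k (s : pred nat) : measurable [set w | s (D k w)].
Proof. rewrite bigcup_s; apply: bigcup_measurable => n _; exact: mDn. Qed.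

Lemma Pdist k (s : pred nat) :
  P [set w | s (D k w)] = (\sum_(n <oo | n \in [set n | s n]) (F n)%:E)%E.
Proof.
rewrite bigcup_s measure_bigcup.
- by apply: eq_eseriesr => n _; case: HM => _ _ H3 _ _; exact: H3.
- by move=> n _; exact: mDn.
- by move=> i j _ _ [w [/= <- <-]].
Qed.

Definition pr (s : pred nat) : R := fine (P [set w | s (D 0 w)]).

Lemma Ppr k (s : pred nat) : P [set w | s (D k w)] = (pr s)%:E.
Proof.
rewrite /pr fineK; last by apply: fin_num_measure; exact: ms.
by rewrite (Pdist k) (Pdist 0).
Qed.

Lemma pr_ge0 (s : pred nat) : 0 <= pr s.
Proof. by rewrite /pr fine_ge0 // measure_ge0. Qed.

Lemma prC (s : pred nat) : pr (predC s) = 1 - pr s.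
Proof.
apply/EFin_inj; rewrite -(Ppr 0) EFinB -(Ppr 0).
have -> : [set w | predC s (D 0 w)] = ~` [set w | s (D 0 w)].
  by apply/seteqP; split => w /=; case: (s _).
by rewrite probability_setC //; exact: ms.
Qed.

Lemma pr_le1 (s : pred nat) : pr s <= 1.
Proof. have := pr_ge0 (predC s); rewrite prC; lra. Qed.

Lemma pr_le (s1 s2 : pred nat) : (forall n, s1 n -> s2 n) -> pr s1 <= pr s2.
Proof.
move=> h; rewrite -lee_fin -!(Ppr 0); apply: le_measure; rewrite ?inE; try exact: ms.
by move=> w /=; apply: h.
Qed.

Lemma pr1 n : pr (pred1 n) = F n.
Proof.
apply/EFin_inj; rewrite -(Ppr 0); case: HM => _ _ H3 _ _; rewrite -(H3 0); congr (P _).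
by apply/seteqP; split => w /= /eqP.
Qed.

Lemma mall (J : seq int) (s : int -> pred nat) :
  measurable [set w | all (fun k => s k (D k w)) J].
Proof.
elim: J => [|k J IH] /=; first by rewrite (_ : [set w | true] = setT) //; apply/seteqP; split.
rewrite (_ : [set w | s k (D k w) && all _ J] = [set w | s k (D k w)] `&` [set w | all (fun k => s k (D k w)) J]).
  by apply: measurableI => //; exact: ms.
by apply/seteqP; split => w /= /andP.
Qed.

Lemma Pall (J : seq int) (s : int -> pred nat) : uniq J ->
  P [set w | all (fun k => s k (D k w)) J] = (\prod_(k <- J) P [set w | s k (D k w)])%E.
Proof.
move=> uJ; case: HM => _ _ _ _ Hind.
pose B := fun x : int + nat => match x with inl i => [set n | s i n] | inr _ => setT end.
have uJ' : uniq (map inl J : seq (int + nat)%type) by rewrite map_inj_uniq // => x y [].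
have := Hind (map inl J) uJ' B; rewrite big_map /= => <-; congr (P _).
apply/seteqP; split => w /=.
  move/allP => H [i|j] /= => /mapP [k kJ] // [->].
  exact: H.
move=> H; apply/allP => k kJ; apply: (H (inl k)); exact: map_f.
Qed.

Lemma prod_cst (J : seq int) (s : pred nat) :
  (\prod_(k <- J) P [set w | s (D k w)])%E = ((pr s) ^+ size J)%:E.
Proof.
elim: J => [|k J IH]; first by rewrite big_nil.
by rewrite big_cons IH Ppr -EFinM exprS.
Qed.

Lemma Pblock (J : seq int) (s : pred nat) : uniq J ->
  P [set w | all (fun k => ~~ s (D k w)) J] = ((1 - pr s) ^+ size J)%:E.
Proof.
move=> uJ; rewrite -prC -(prod_cst J (predC s)).
exact: (Pall J (fun _ => predC s) uJ).
Qed.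

Lemma int_mono (f g : Omega -> \bar R) : (forall x, (0 <= f x)%E) -> (forall x, (f x <= g x)%E) ->
  (\int[P]_x f x <= \int[P]_x g x)%E.
Proof.
move=> f0 fg; rewrite !ge0_integralTE //; last by move=> x; exact: le_trans (f0 x) (fg x).
apply: le_ereal_sup => _ [h hf <-]; exists h => // x; exact: le_trans (hf x) (fg x).
Qed.

Lemma mindic (A : set Omega) : measurable A -> measurable_fun setT (fun w => (\1_A w)%:E : \bar R).
Proof. by move=> mA; apply/measurable_EFinP; exact: measurable_indic. Qed.

Lemma int_indic (A : set Omega) (k : R) : measurable A -> 0 <= k ->
  (\int[P]_w (k * \1_A w)%:E = k%:E * P A)%E.
Proof.
move=> mA k0; under eq_integral do rewrite EFinM.
by rewrite ge0_integralZl_EFin //= ?integral_indic ?setIT //; exact: mindic.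
Qed.

Definition idxR (i b : nat) : seq int := [seq (1 + (i * b + t)%N%:Z) | t <- iota 0 b].
Definition idxL (i b : nat) : seq int := [seq (- (i * b + t)%N.+1%:Z) | t <- iota 0 b].
Definition EvR (s : pred nat) i b := [set w | all (fun k => ~~ s (D k w)) (idxR i b)].
Definition EvL (s : pred nat) i b := [set w | all (fun k => ~~ s (D k w)) (idxL i b)].

Lemma mEvR s i b : measurable (EvR s i b).
Proof. exact: (mall _ (fun _ => predC s)). Qed.
Lemma mEvL s i b : measurable (EvL s i b).
Proof. exact: (mall _ (fun _ => predC s)). Qed.

Lemma PEvR s i b : P (EvR s i b) = ((1 - pr s) ^+ b)%:E.
Proof.
rewrite /EvR Pblock /idxR ?size_map ?size_iota //.
rewrite map_inj_uniq ?iota_uniq // => x y h; lia.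
Qed.

Lemma PEvL s i b : P (EvL s i b) = ((1 - pr s) ^+ b)%:E.
Proof.
rewrite /EvL Pblock /idxL ?size_map ?size_iota //.
rewrite map_inj_uniq ?iota_uniq // => x y h; lia.
Qed.

Lemma blockR w (s : pred nat) m n : (0 < m)%N ->
  (\sum_(0 <= k < n) s (D (1 + k%:Z) w) < m)%N -> exists2 i, (i < m)%N & EvR s i (n %/ m)%N w.
Proof.
move=> m0 h; have [i im hi] := @block_nat (fun k => s (D (1 + k%:Z) w)) m n m0 h.
by exists i => //; rewrite /EvR /idxR /= all_map.
Qed.

Lemma blockL w (s : pred nat) m n : (0 < m)%N ->
  (\sum_(0 <= k < n) s (D (- k.+1%:Z) w) < m)%N -> exists2 i, (i < m)%N & EvL s i (n %/ m)%N w.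
Proof.
move=> m0 h; have [i im hi] := @block_nat (fun k => s (D (- k.+1%:Z) w)) m n m0 h.
by exists i => //; rewrite /EvL /idxL /= all_map.
Qed.

Lemma bool_le (M j x : nat) : (j <= M)%N -> ((M <= x)%N <= (j <= x)%N)%N.
Proof. by move=> jM; case: (leqP M x) => //= Mx; rewrite (leq_trans jM Mx). Qed.

Lemma keyR w M j n : (1 <= j)%N -> (j <= M)%N ->
  (n < odflt 0%N (dist_right (fun k => D k w) j 0))%N ->
  exists2 i, (i < (2 * M).-1)%N & EvR (fun x => M <= x)%N i (n %/ (2 * M).-1)%N w.
Proof.
move=> j1 jM hn; apply: blockR; first lia.
rewrite ltnNge; apply/negP => hm.
have : ((2 * j).-1 <= gamma_cnt (fun k => D k w) j 1 n)%N.
  apply: leq_trans _ (leq_trans hm _); first lia.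
  by rewrite /gamma_cnt; apply: leq_sum => k _; exact: bool_le.
by case/distR_le => x hx xn; move: hn; rewrite hx /=; lia.
Qed.

Lemma keyL w M j n : (1 <= j)%N -> (j <= M)%N ->
  (n < odflt 0%N (dist_left (fun k => D k w) j 0))%N ->
  exists2 i, (i < (2 * M).-1)%N & EvL (fun x => M <= x)%N i (n %/ (2 * M).-1)%N w.
Proof.
move=> j1 jM hn; apply: blockL; first lia.
rewrite ltnNge; apply/negP => hm.
have : ((2 * j).-1 <= gamma_cnt (fun k => D k w) j (0 - n%:Z) n)%N.
  rewrite gcntL; apply: leq_trans _ (leq_trans hm _); first lia.
  by apply: leq_sum => k _; exact: bool_le.
by case/distL_le => x hx xn; move: hn; rewrite hx /=; lia.
Qed.

Definition mM M := (2 * M).-1.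
Definition BigE M := [set w | (M < D 0 w)%N].
Definition sM M : pred nat := fun x => (M <= x)%N.
Definition inR M n w : R := \sum_(i < mM M) \1_(EvR (sM M) i (n %/ mM M)%N) w.
Definition inL M n w : R := \sum_(i < mM M) \1_(EvL (sM M) i (n %/ mM M)%N) w.
Definition grU M n w : R := M%:R * (inR M n w + inL M n w) + \1_(BigE M) w.

Lemma ind_ge0 (A : set Omega) w : 0 <= \1_A w :> R.
Proof. by rewrite indicE ler0n. Qed.

Lemma inR_ge0 M n w : 0 <= inR M n w.
Proof. by apply: sumr_ge0 => i _; exact: ind_ge0. Qed.
Lemma inL_ge0 M n w : 0 <= inL M n w.
Proof. by apply: sumr_ge0 => i _; exact: ind_ge0. Qed.

Lemma grU_ge0 M n w : 0 <= grU M n w.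
Proof.
by rewrite /grU addr_ge0 ?ind_ge0 // mulr_ge0 ?ler0n // addr_ge0 ?inR_ge0 ?inL_ge0.
Qed.

Lemma sumr_sub (f : nat -> R) a b : (forall n, 0 <= f n) -> (a <= b)%N ->
  \sum_(0 <= n < a) f n <= \sum_(0 <= n < b) f n.
Proof.
move=> f0 ab; rewrite (@big_cat_nat _ _ _ a 0 b) //= lerDl.
by apply: sumr_ge0 => i _.
Qed.

Lemma inR_ge1 w M j n : (1 <= j)%N -> (j <= M)%N ->
  (n < odflt 0%N (dist_right (fun k => D k w) j 0))%N -> 1 <= inR M n w.
Proof.
move=> j1 jM hn; have [i im hi] := keyR w M j n j1 jM hn.
rewrite /inR (bigD1 (Ordinal im)) //= indicE mem_set // lerDl.
by apply: sumr_ge0 => k _; exact: ind_ge0.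
Qed.

Lemma inL_ge1 w M j n : (1 <= j)%N -> (j <= M)%N ->
  (n < odflt 0%N (dist_left (fun k => D k w) j 0))%N -> 1 <= inL M n w.
Proof.
move=> j1 jM hn; have [i im hi] := keyL w M j n j1 jM hn.
rewrite /inL (bigD1 (Ordinal im)) //= indicE mem_set // lerDl.
by apply: sumr_ge0 => k _; exact: ind_ge0.
Qed.

Lemma sumR_ge w M j N : (1 <= j)%N -> (j <= M)%N ->
  (odflt 0%N (dist_right (fun k => D k w) j 0) <= N)%N ->
  (odflt 0%N (dist_right (fun k => D k w) j 0))%:R <= \sum_(0 <= n < N) inR M n w.
Proof.
move=> j1 jM xN; set x := odflt _ _.
apply: le_trans _ (@sumr_sub (fun n => inR M n w) x N (fun n => inR_ge0 M n w) xN).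
apply: le_trans (_ : \sum_(0 <= n < x) (1 : R) <= _).
  by rewrite sumr_const_nat subn0.
by apply: ler_sum_nat => n /andP[_ hn]; exact: inR_ge1 hn.
Qed.

Lemma sumL_ge w M j N : (1 <= j)%N -> (j <= M)%N ->
  (odflt 0%N (dist_left (fun k => D k w) j 0) <= N)%N ->
  (odflt 0%N (dist_left (fun k => D k w) j 0))%:R <= \sum_(0 <= n < N) inL M n w.
Proof.
move=> j1 jM xN; set x := odflt _ _.
apply: le_trans _ (@sumr_sub (fun n => inL M n w) x N (fun n => inL_ge0 M n w) xN).
apply: le_trans (_ : \sum_(0 <= n < x) (1 : R) <= _).
  by rewrite sumr_const_nat subn0.
by apply: ler_sum_nat => n /andP[_ hn]; exact: inL_ge1 hn.
Qed.

Lemma stub_le (Dz : int -> nat) cc j : (odflt 0%N (stub_len Dz cc j 0) <=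
  odflt 0%N (dist_right Dz j 0) + odflt 0%N (dist_left Dz j 0))%N.
Proof. by rewrite /stub_len; case: ifP => _; [exact: leq_addr | exact: leq_addl]. Qed.

Lemma U1 M w : ((CT_T R (fun i => D i w) (fun j => c j w))%:E <= \sum_(n <oo) (grU M n w)%:E)%E.
Proof.
suff [N hN] : exists N, CT_T R (fun i => D i w) (fun j => c j w) <= \sum_(0 <= n < N) grU M n w.
  apply: le_trans (_ : (\sum_(0 <= n < N) grU M n w)%:E <= _)%E; first by rewrite lee_fin.
  rewrite -sumEFin; apply: nneseries_lim_ge => n _ _; rewrite lee_fin; exact: grU_ge0.
rewrite /CT_T; set Dz := fun i => D i w; set cc := fun j => c j w.
case: (leqP (D 0 w) M) => hD.
- pose xR j := odflt 0%N (dist_right Dz j 0); pose xL j := odflt 0%N (dist_left Dz j 0).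
  pose N := (\sum_(1 <= j < (D 0 w).+1) (xR j + xL j))%N.
  exists N.
  have hx j : (1 <= j < (D 0 w).+1)%N -> (xR j + xL j <= N)%N.
    move=> hj; rewrite /N (bigD1_seq j) ?mem_index_iota //=; first exact: leq_addr.
    by rewrite /index_iota iota_uniq.
  set SR := \sum_(0 <= n < N) inR M n w; set SL := \sum_(0 <= n < N) inL M n w.
  apply: le_trans (_ : (\sum_(1 <= j < (D 0 w).+1) (xR j + xL j))%N%:R <= _).
    by rewrite ler_nat; apply: leq_sum => j _; exact: stub_le.
  rewrite natr_sum; apply: le_trans (_ : \sum_(1 <= j < (D 0 w).+1) (SR + SL) <= _).
    apply: ler_sum_nat => j hj; rewrite natrD; apply: lerD.
      apply: sumR_ge; [lia | lia | apply: leq_trans (hx j hj); exact: leq_addr].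
    apply: sumL_ge; [lia | lia | apply: leq_trans (hx j hj); exact: leq_addl].
  rewrite sumr_const_nat subSS subn0.
  apply: le_trans (_ : M%:R * (SR + SL) <= _).
    rewrite -[(SR + SL) *+ _]mulr_natl; apply: ler_wpM2r; last by rewrite ler_nat.
    by rewrite addr_ge0 // sumr_ge0 // => n _; [exact: inR_ge0 | exact: inL_ge0].
  rewrite /SR /SL -big_split mulr_sumr /=; apply: ler_sum_nat => n _.
  rewrite /grU lerDl; exact: ind_ge0.
- exists (\sum_(1 <= j < (Dz 0).+1) odflt 0%N (stub_len Dz cc j 0))%N.
  set T := (\sum_(1 <= j < _) _)%N.
  apply: le_trans (_ : \sum_(0 <= n < T) (1 : R) <= _); first by rewrite sumr_const_nat subn0.
  apply: ler_sum_nat => n _; rewrite /grU indicE mem_set //.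
  have h : 0 <= M%:R * (inR M n w + inL M n w).
    by rewrite mulr_ge0 ?ler0n // addr_ge0 ?inR_ge0 ?inL_ge0.
  rewrite /=; lra.
Qed.

Lemma mkind (A : set Omega) (k : R) : measurable A ->
  measurable_fun setT (fun w => (k * \1_A w)%:E : \bar R).
Proof.
move=> mA; apply/measurable_EFinP.
apply: (@measurable_funM _ _ _ _ (cst k) (\1_A)) => //; exact: measurable_indic.
Qed.

Lemma kind_ge0 (A : set Omega) (k : R) w : 0 <= k -> (0 <= (k * \1_A w)%:E)%E.
Proof. by move=> k0; rewrite lee_fin mulr_ge0 // ind_ge0. Qed.

Lemma mBigE M : measurable (BigE M).
Proof. exact: (ms 0 (fun n => (M < n)%N)). Qed.

Lemma grU_E M n : (fun w => (grU M n w)%:E) = (fun w =>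
  (\sum_(i < mM M) ((M%:R * \1_(EvR (sM M) i (n %/ mM M)%N) w)%:E +
                   (M%:R * \1_(EvL (sM M) i (n %/ mM M)%N) w)%:E) +
   (1 * \1_(BigE M) w)%:E)%E).
Proof.
apply/funext => w; rewrite sumEFin -EFinD mul1r; congr (_%:E).
rewrite /grU /inR /inL -big_split mulr_sumr /=; congr (_ + _).
by apply: eq_bigr => i _; rewrite mulrDr.
Qed.

Lemma esum_cst (x : R) n : (\sum_(i < n) x%:E)%E = (x *+ n)%:E.
Proof.
elim: n => [|n IH]; first by rewrite big_ord0.
by rewrite big_ord_recr /= IH mulrSr EFinD.
Qed.

Lemma int_grU M n : P (BigE M) = 0%E ->
  (\int[P]_w (grU M n w)%:E = ((M%:R * (mM M)%:R * 2) * (1 - pr (sM M)) ^+ (n %/ mM M)%N)%:E)%E.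
Proof.
move=> PB; rewrite grU_E ge0_integralD //; last 3 first.
- by move=> w _; rewrite sume_ge0 // => i _; rewrite adde_ge0 // kind_ge0.
- apply: emeasurable_sum => i; apply: emeasurable_funD; [exact: mkind (mEvR _ _ _) | exact: mkind (mEvL _ _ _)].
- exact: mkind (mBigE M).
rewrite ge0_integral_sum //; last 2 first.
- move=> i; apply: emeasurable_funD; [exact: mkind (mEvR _ _ _) | exact: mkind (mEvL _ _ _)].
- by move=> i w _; rewrite adde_ge0 // kind_ge0.
rewrite int_indic ?PB; last 2 first; [exact: mBigE | by [] | ].
rewrite mul1e adde0.
rewrite (eq_bigr (fun _ => ((M%:R * (1 - pr (sM M)) ^+ (n %/ mM M)%N) * 2)%:E)); last first.
  move=> i _; rewrite ge0_integralD; [| done | move=> w _; exact: kind_ge0 | exact: mkind (mEvR _ _ _)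
    | move=> w _; exact: kind_ge0 | exact: mkind (mEvL _ _ _)].
  rewrite !int_indic ?ler0n //; try (exact: mEvR); try (exact: mEvL).
  have := PEvR (sM M) i (n %/ mM M)%N; have := PEvL (sM M) i (n %/ mM M)%N.
  move=> -> ->; rewrite /=; congr (_%:E); ring.
rewrite esum_cst; congr (_%:E).
rewrite -mulr_natr; ring.
Qed.

Lemma mgrU M n : measurable_fun setT (fun w => (grU M n w)%:E).
Proof.
rewrite grU_E; apply: emeasurable_funD; last exact: mkind (mBigE M).
apply: emeasurable_sum => i; apply: emeasurable_funD; [exact: mkind (mEvR _ _ _) | exact: mkind (mEvL _ _ _)].
Qed.

Lemma upper M : 0 < pr (sM M) -> P (BigE M) = 0%E ->
  (\int[P]_w (CT_T R (fun i => D i w) (fun j => c j w))%:E < +oo)%E.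
Proof.
move=> p0 PB.
apply: le_lt_trans (_ : _ <= \int[P]_w (\sum_(n <oo) (grU M n w)%:E))%E _.
  by apply: int_mono => w; [rewrite lee_fin /CT_T ler0n | exact: U1].
rewrite integral_nneseries //; last 2 first.
- exact: mgrU.
- by move=> n w _; rewrite lee_fin grU_ge0.
under eq_eseriesr do rewrite int_grU //.
have q0 : 0 <= 1 - pr (sM M) by have := pr_le1 (sM M); lra.
have q1 : 1 - pr (sM M) < 1 by lra.
have C0 : 0 <= M%:R * (mM M)%:R * 2 :> R by rewrite !mulr_ge0 ?ler0n.
case m0: (mM M) => [|m'].
  rewrite eseries0 ?ltry // => n _ _; by rewrite mulr0 mul0r mul0r.
apply: le_lt_trans (_ : _ <= ((M%:R * m'.+1%:R * 2) * (m'.+1%:R * (1 - (1 - pr (sM M)))^-1))%:E)%E _; last exact: ltry.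
apply: lime_le; first by apply: is_cvg_nneseries => n _ _; rewrite lee_fin mulr_ge0 ?exprn_ge0 //; rewrite -m0.
apply: nearW => N; rewrite sumEFin lee_fin -mulr_sumr; apply: ler_wpM2l; first by rewrite -m0.
exact: geom_div_le.
Qed.

Definition Aidx L : seq int := 0 :: idxR 0 L ++ idxL 0 L.
Definition sA j (k : int) : pred nat := if k == 0 then sM j else predC (sM j).
Definition Aev j L := [set w | all (fun k => sA j k (D k w)) (Aidx L)].

Lemma Aidx_uniq L : uniq (Aidx L).
Proof.
rewrite /Aidx /= cat_uniq mem_cat !map_inj_uniq ?iota_uniq //; last 2 first.
- by move=> x y h; lia.
- by move=> x y h; lia.
rewrite andbT; apply/andP; split.
  by apply/negP => /orP[] /mapP [t _] h; lia.
by apply/hasPn => x /mapP [t _ ->]; apply/negP => /mapP [t' _] h; lia.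
Qed.

Lemma prod_cond (J : seq int) j : (forall k, k \in J -> k != 0) ->
  (\prod_(k <- J) P [set w | sA j k (D k w)])%E = ((1 - pr (sM j)) ^+ size J)%:E.
Proof.
elim: J => [|k J IH] hJ; first by rewrite big_nil.
rewrite big_cons IH; last by move=> k' kJ; apply: hJ; rewrite inE kJ orbT.
have k0 : k != 0 by apply: hJ; rewrite inE eqxx.
rewrite /sA (negbTE k0) Ppr prC -EFinM exprS.
done.
Qed.

Lemma PAev j L : P (Aev j L) = (pr (sM j) * (1 - pr (sM j)) ^+ (L + L))%:E.
Proof.
rewrite /Aev Pall ?Aidx_uniq // /Aidx big_cons prod_cond.
  by rewrite /sA eqxx Ppr size_cat !size_map !size_iota -EFinM.
move=> k; rewrite mem_cat => /orP[] /mapP [t _ ->]; apply/negP => /eqP h; lia.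
Qed.

Lemma mAev j L : measurable (Aev j L).
Proof. exact: mall. Qed.

Definition Evp j b k := if (k < mM j)%N then EvR (sM j) k b else EvL (sM j) (k - mM j) b.
Definition Bad j b := \big[setU/set0]_(k < 2 * mM j) Evp j b k.

Lemma mEvp j b k : measurable (Evp j b k).
Proof. by rewrite /Evp; case: ifP => _; [exact: mEvR | exact: mEvL]. Qed.

Lemma mBad j b : measurable (Bad j b).
Proof. by apply: bigsetU_measurable => k _; exact: mEvp. Qed.

Lemma PBad j b : (P (Bad j b) <= ((1 - pr (sM j)) ^+ b *+ (2 * mM j))%:E)%E.
Proof.
apply: le_trans (@content_subadditive _ _ _ P (Bad j b) (Evp j b) (2 * mM j) _ _ _) _.
- by move=> k _; exact: mEvp.
- exact: mBad.
- by [].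
rewrite (eq_bigr (fun _ => ((1 - pr (sM j)) ^+ b)%:E)) ?esum_cst //.
by move=> k _; rewrite /Evp; case: ifP => _; [exact: PEvR | exact: PEvL].
Qed.

Lemma good_stub w j L b : (1 <= j)%N -> Aev j L w -> ~ Bad j b w ->
  (j <= D 0 w)%N /\ (L < odflt 0%N (stub_len (fun k => D k w) (fun j => c j w) j 0))%N.
Proof.
move=> j1 hA hB; set Dz := fun k => D k w.
move: hA; rewrite /Aev /Aidx /= all_cat => /andP[h0 /andP[hR hL]].
move: h0; rewrite /sA eqxx /sM => h0; split => //.
have m0 : (0 < mM j)%N by rewrite /mM; lia.
have gR : gamma_cnt Dz j 1 L = 0%N.
  rewrite /gamma_cnt big_nat_cond big1 // => k /andP[/andP[_ kL] _].
  have := allP hR (1 + (0 * L + k)%N%:Z) (map_f _ _); rewrite mem_iota add0n => /(_ kL).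
  rewrite mul0n add0n /sA; have -> : (1 + k%:Z == 0) = false by apply/eqP; lia.
  by rewrite /sM /= /Dz => /negbTE ->.
have gL : gamma_cnt Dz j (0 - L%:Z) L = 0%N.
  rewrite gcntL big_nat_cond big1 // => k /andP[/andP[_ kL] _].
  have := allP hL (- (0 * L + k)%N.+1%:Z) (map_f _ _); rewrite mem_iota add0n => /(_ kL).
  rewrite mul0n add0n /sA; have -> : (- k.+1%:Z == 0) = false by apply/eqP; lia.
  by rewrite /sM /= /Dz => /negbTE ->.
have cR : (mM j <= gamma_cnt Dz j 1 (mM j * b))%N.
  rewrite leqNgt; apply/negP => h.
  have [i im hi] := blockR w (sM j) (mM j) (mM j * b) m0 h.
  apply: hB; apply: (@bigsetU_sup _ i); first by lia.
  by rewrite /Evp im; rewrite mulKn // in hi.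
have cL : (mM j <= gamma_cnt Dz j (0 - (mM j * b)%N%:Z) (mM j * b))%N.
  rewrite gcntL leqNgt; apply/negP => h.
  have [i im hi] := blockL w (sM j) (mM j) (mM j * b) m0 h.
  apply: hB; apply: (@bigsetU_sup _ (mM j + i)); first by lia.
  rewrite /Evp ltnNge leq_addr /= addKn.
  by rewrite mulKn // in hi.
have [x hx _] := @distR_le Dz j _ cR.
have [y hy _] := @distL_le Dz j _ cL.
have Lx : (L < x)%N.
  rewrite ltnNge; apply/negP => xL; have := gcnt_mono Dz j 1 x L xL.
  rewrite gR (@distR_some Dz j x hx); rewrite /mM in m0; lia.
have Ly : (L < y)%N.
  rewrite ltnNge; apply/negP => yL.
  have hy' := @distL_some Dz j y hy.
  have : (gamma_cnt Dz j (0 - y%:Z) y <= gamma_cnt Dz j (0 - L%:Z) L)%N.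
    by rewrite !gcntL; apply: sum_mono.
  rewrite hy' gL; rewrite /mM in m0; lia.
by rewrite /stub_len; case: ifP => _; [rewrite hx | rewrite hy].
Qed.

Definition Lj j := Num.truncn ((4 * pr (sM j))^-1).
Definition bj j := (Num.truncn (8 * (mM j)%:R / pr (sM j) ^+ 2)).+1.
Definition Gd j := Aev j (Lj j) `\` Bad j (bj j).

Lemma mGd j : measurable (Gd j).
Proof. apply: measurableD; [exact: mAev | exact: mBad]. Qed.

Lemma finP (A : set Omega) : measurable A -> (fine (P A))%:E = P A.
Proof. by move=> mA; rewrite fineK // fin_num_measure. Qed.

Lemma Gd_bound j : (1 <= j)%N -> 0 < pr (sM j) -> pr (sM j) <= 8^-1 ->
  1 / 32 <= (Lj j)%:R * fine (P (Gd j)).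
Proof.
move=> j1 p0 p8.
have mA := mAev j (Lj j); have mB := mBad j (bj j).
have eA : pr (sM j) * (1 - pr (sM j)) ^+ (Lj j + Lj j) =
    fine (P (Gd j)) + fine (P (Aev j (Lj j) `&` Bad j (bj j))).
  apply/EFin_inj; rewrite EFinD !finP; last 2 first.
    exact: measurableI. exact: measurableD.
  apply: (@eq_trans _ _ (P (Aev j (Lj j)))); first by rewrite PAev.
  exact: measureDI.
have hab : fine (P (Aev j (Lj j) `&` Bad j (bj j))) <= (1 - pr (sM j)) ^+ (bj j) * (2 * (mM j)%:R).
  rewrite -natrM mulr_natr -lee_fin finP; last exact: measurableI.
  apply: le_trans _ (PBad j (bj j)).
  apply: le_measure; rewrite ?inE //; try exact: measurableI.
have x0 : 0 <= (4 * pr (sM j))^-1 by rewrite invr_ge0; apply: mulr_ge0 => //; exact: ltW.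
have /andP[hL1 hL2] := truncn_itv x0.
apply: (@arith_bound R (pr (sM j)) (fine (P (Gd j))) _ ((mM j)%:R) (Lj j) (bj j) p0 p8 _ _ hL1 hL2 _ eA hab).
- by rewrite ler1n /mM; lia.
- by rewrite fine_ge0 // measure_ge0.
- exact: truncnS_gt.
Qed.

Lemma Gd_stub w j : (1 <= j)%N -> Gd j w ->
  (j <= D 0 w)%N /\ (Lj j < odflt 0%N (stub_len (fun k => D k w) (fun j => c j w) j 0))%N.
Proof. by move=> j1 [hA hB]; exact: (@good_stub w j (Lj j) (bj j) j1 hA hB). Qed.

Lemma sumr_sub1 (f : nat -> R) a b e : (forall n, 0 <= f n) -> (a <= e)%N -> (e <= b)%N ->
  \sum_(a <= n < e) f n <= \sum_(a <= n < b) f n.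
Proof.
move=> f0 ae eb; rewrite (@big_cat_nat _ _ _ e a b) //= lerDl.
by apply: sumr_ge0 => i _.
Qed.

Lemma lower_ptwise w N :
  \sum_(1 <= j < N) (Lj j)%:R * \1_(Gd j) w <= CT_T R (fun i => D i w) (fun j => c j w).
Proof.
pose h := fun j : nat => ((Lj j)%:R * \1_(Gd j) w : R).
have h0 j : 0 <= h j by rewrite /h mulr_ge0 ?ind_ge0.
set K := maxn N (D 0 w).+1.
apply: le_trans (_ : \sum_(1 <= j < K) h j <= _).
  have [N0|N1] := leqP N 1%N.
    by rewrite big_geq // sumr_ge0.
  by apply: sumr_sub1 => //; [exact: ltnW | rewrite /K leq_maxl].
rewrite (@big_cat_nat _ _ _ (D 0 w).+1 1 K) //= ?leq_maxr //.
have -> : \sum_((D 0 w).+1 <= j < K) h j = 0.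
  rewrite big_nat_cond big1 // => j /andP[/andP[Dj _] _]; rewrite /h indicE.
  case: (boolP (w \in Gd j)) => [/set_mem hG|]; last by rewrite mulr0.
  have [jD _] := Gd_stub w j (leq_trans (ltn0Sn _) Dj) hG; lia.
rewrite addr0 /CT_T natr_sum; apply: ler_sum_nat => j /andP[j1 _].
rewrite /h indicE; case: (boolP (w \in Gd j)) => [/set_mem hG|]; last by rewrite mulr0 ler0n.
have [_ hL] := Gd_stub w j j1 hG; rewrite mulr1 ler_nat; exact: ltnW.
Qed.

Lemma lower_int N :
  (\sum_(1 <= j < N) ((Lj j)%:R * fine (P (Gd j)))%:E <=
   \int[P]_w (CT_T R (fun i => D i w) (fun j => c j w))%:E)%E.
Proof.
have -> : (\sum_(1 <= j < N) ((Lj j)%:R * fine (P (Gd j)))%:E =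
    \int[P]_w (\sum_(1 <= j < N) ((Lj j)%:R * \1_(Gd j) w)%:E))%E.
  rewrite ge0_integral_sum //; try (by move=> j; exact: mkind (mGd j)); try (by move=> j w _; exact: kind_ge0).
  apply: eq_bigr => j _; rewrite (@int_indic (Gd j) _ (mGd j)) //.
  by rewrite -(@finP (Gd j) (mGd j)).
apply: int_mono.
  by move=> w; apply: sume_ge0 => j _; exact: kind_ge0.
by move=> w; rewrite sumEFin lee_fin; exact: lower_ptwise.
Qed.

Lemma pr_ext (s1 s2 : pred nat) : s1 =1 s2 -> pr s1 = pr s2.
Proof. by move=> h; congr pr; apply/funext. Qed.

Lemma prlt n : pr (fun x => (x < n)%N) = \sum_(k < n) F k.
Proof.
elim: n => [|n IH].
  rewrite big_ord0 /pr; have := Pdist 0 (fun x => (x < 0)%N); rewrite /= => ->.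
  by rewrite eseries0 // => i _ /set_mem; rewrite /= ltn0.
apply/EFin_inj; rewrite big_ord_recr /= EFinD -IH -(pr1 n) -!(Ppr 0).
have -> : [set w | (D 0 w < n.+1)%N] =
    [set w | (D 0 w < n)%N] `|` [set w | pred1 n (D 0 w)].
  apply/seteqP; split => w /=; first by rewrite ltnS leq_eqVlt => /orP[/eqP ->|]; [right|left].
  by case=> [h|/eqP ->] //; exact: ltnW.
rewrite measureU //; try exact: (ms 0 (fun x => (x < n)%N)); try exact: (ms 0 (pred1 n)).
by apply/seteqP; split => w //= [h /eqP hn]; move: h; rewrite hn ltnn.
Qed.

Lemma pr_sM n : pr (sM n) = 1 - \sum_(k < n) F k.
Proof.
rewrite -prlt -prC; apply: pr_ext => x; by rewrite /sM /= -leqNgt.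
Qed.

Lemma main (F0 : forall n, 0 <= F n) (F1 : (\sum_(n <oo) (F n)%:E = 1)%E) :
  ((\int[P]_w (CT_T R (fun i => D i w) (fun j => c j w))%:E < +oo)%E <-> bounded_support F).
Proof.
split.
- move=> Hfin; case: (pselect (bounded_support F)) => // Hnb; exfalso.
  have ppos j : 0 < pr (sM j).
    rewrite lt_def pr_ge0 andbT; apply/negP => /eqP p0; apply: Hnb; exists j => n jn.
    apply/eqP; rewrite eq_le F0 andbT -(pr1 n) -p0; apply: pr_le => x /eqP ->.
    by rewrite /sM; exact: ltnW.
  have [j0 [j01 hj0]] : exists j0, (1 <= j0)%N /\ pr (sM j0) <= 8^-1.
    have [n hn] : exists n, 7/8 <= \sum_(k < n) F k.
      case: (pselect (exists n, 7/8 <= \sum_(k < n) F k)) => // hno; exfalso.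
      have : (\sum_(n <oo) (F n)%:E <= (7/8)%:E)%E.
        apply: lime_le; first by apply: is_cvg_nneseries => n _ _; rewrite lee_fin.
        apply: nearW => N; rewrite sumEFin lee_fin big_mkord leNgt; apply/negP => h.
        by apply: hno; exists N; exact: ltW.
      rewrite F1 lee_fin; lra.
    exists n.+1; split => //; rewrite pr_sM.
    have : \sum_(k < n) F k <= \sum_(k < n.+1) F k by rewrite big_ord_recr /= lerDl F0.
    lra.
  have hp8 j : (j0 <= j)%N -> pr (sM j) <= 8^-1.
    move=> jj; apply: le_trans hj0; apply: pr_le => x; rewrite /sM => h; exact: leq_trans jj h.
  set I := (\int[P]_w _)%E in Hfin.
  have I0 : (0 <= I)%E by apply: integral_ge0 => w _; rewrite lee_fin ler0n.
  have Ifin : I = (fine I)%:E by rewrite fineK // ge0_fin_numE.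
  pose N := (j0 + 32 * (Num.truncn (fine I)).+1)%N.
  have := lower_int N; rewrite -/I Ifin sumEFin lee_fin => hle.
  have hs : (N - j0)%:R / 32 <= \sum_(1 <= j < N) (Lj j)%:R * fine (P (Gd j)).
    rewrite (@big_cat_nat _ _ _ j0 1 N) //=; last by rewrite /N leq_addr.
    rewrite -[X in X <= _]add0r; apply: lerD.
      by apply: sumr_ge0 => j _; rewrite mulr_ge0 ?ler0n // fine_ge0 // measure_ge0.
    apply: le_trans (_ : \sum_(j0 <= j < N) (1 / 32 : R) <= _).
      by rewrite sumr_const_nat -[(1 / 32 : R) *+ _]mulr_natr mul1r mulrC.
    apply: ler_sum_nat => j /andP[jj _]; apply: Gd_bound; [lia | exact: ppos | exact: hp8].
  have hN : (N - j0)%:R / 32 = (Num.truncn (fine I)).+1%:R :> R.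
    by rewrite /N addKn natrM; field.
  have := truncnS_gt (fine I); lra.
- case=> K HK.
  have ex : exists n, 0 < F n.
    case: (pselect (exists n, 0 < F n)) => // hno; exfalso.
    have F00 n : F n = 0.
      apply/eqP; rewrite eq_le F0 andbT leNgt; apply/negP => h; apply: hno; by exists n.
    move: F1; rewrite eseries0; last by move=> i _ _; rewrite F00.
    by move/(congr1 fine) => /=; lra.
  have ubK : forall n, 0 < F n -> (n <= K)%N.
    by move=> n Fn; rewrite leqNgt; apply/negP => Kn; move: Fn; rewrite HK // ltxx.
  case: (ex_maxnP ex ubK) => M FM Mmax.
  have HMz : forall n, (M < n)%N -> F n = 0.
    move=> n Mn; apply/eqP; rewrite eq_le F0 andbT leNgt; apply/negP => h.
    by have := Mmax n h; lia.
  apply: (upper M).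
  + apply: lt_le_trans FM _; rewrite -pr1; apply: pr_le => x /eqP ->; exact: leqnn.
  + have := Pdist 0 (fun n => (M < n)%N); rewrite /BigE /= => ->.
    by rewrite eseries0 // => i _ /set_mem /= /HMz ->.
Qed.

End Prob.

Theorem corollary2p2 (R : realType) (d : measure_display)
  (Omega : measurableType d) (P : probability Omega R) (F : nat -> R)
  (D : int -> Omega -> nat) (c : nat -> Omega -> bool) :
  (forall n, 0 <= F n) ->
  (\sum_(n <oo) (F n)%:E = 1)%E ->
  CT_model P F D c ->
  ((\int[P]_w (CT_T R (fun i => D i w) (fun j => c j w))%:E < +oo)%E
   <-> bounded_support F).
Proof.
move=> F0 F1 HM; exact: (@main R d Omega P F D c HM F0 F1).
Qed.
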